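(* Let $G$ be a finitely generated group and $\phi\in\mathrm{Aut}(G)$. Then: (i) if $GCP_{f.g.}(G\rtimes_\phi\mathbb{Z})$ is decidable, then $GBrCP_{(f.g.,\phi)}(G)$ is decidable; (ii) if $GCP_{f.g.}(G\rtimes\mathbb{Z})$ is decidable, then $GBrCP_{f.g.}(G)$ is decidable; (iii) if $GCP_{[f.g.\,coset]}(G\rtimes_\phi\mathbb{Z})$ is decidable, then $GBrCP_{([f.g.\,coset],\phi)}(G)$ and $GTCP_{([f.g.\,coset],\phi)}(G)$ are decidable; (iv) if $GCP_{[f.g.\,coset]}(G\rtimes\mathbb{Z})$ is decidable, then $GBrCP_{[f.g.\,coset]}(G)$ and $GTCP_{[f.g.\,coset]}(G)$ are decidable.
   Context: $G\rtimes_\psi\mathbb{Z}$ is generated by $G$ and $t$ with $t^{-1}at=\psi(a)$. Subgroups are given by finite generating sets, cosets $yH$ by $y$ and generators of $H$. For a class $\mathcal C$ ($f.g.$ = finitely generated subgroups, $[f.g.\,coset]$ = cosets of finitely generated subgroups): $GCP_{\mathcal C}(X)$: given $K\in\mathcal C$ in the group $X$ and $x\in X$, decide whether some conjugate of $x$ lies in $K$; $GCP_{\mathcal C}(G\rtimes\mathbb{Z})$ is the uniform version in which the automorphism $\psi$ defining $G\rtimes_\psi\mathbb{Z}$ is also part of the input. $GBrCP_{\mathcal C}(G)$: given $K\in\mathcal C$ in $G$, $\psi\in\mathrm{Aut}(G)$, $x\in G$, decide whether some $\psi^k(x)$ ($k\in\mathbb{Z}$) is conjugate to an element of $K$. $GTCP_{\mathcal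 C}(G)$: given $K$, $\psi$, $x$, decide whether there is $z\in G$ with $\psi(z)^{-1}xz\in K$. A subscript $(\mathcal C,\phi)$ means the automorphism is fixed to be $\phi$ rather than being part of the input. *)

(* Defs.v *)
From HB Require Import structures.
From mathcomp Require Import all_boot all_order all_algebra.
Set Implicit Arguments. Unset Strict Implicit. Unset Printing Implicit Defensive.

Inductive recf : Type :=
| RZero : recf
| RSucc : recf
| RProj : nat -> recf
| RComp : recf -> seq recf -> recf
| RPrim : recf -> recf -> recf
| RMu   : recf -> recf.

Inductive reval : recf -> seq nat -> nat -> Prop :=
| evZero v : reval RZero v 0
| evSucc x v : reval RSucc (x :: v) x.+1
| evProj i v : reval (RProj i) v (nth 0 v i)
| evComp f gs v ys y : revals gs v ys -> reval f ys y -> reval (RComp f gs) v y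
| evPrim0 f g v y : reval f v y -> reval (RPrim f g) (0 :: v) y
| evPrimS f g n v z y : reval (RPrim f g) (n :: v) z -> reval g (n :: z :: v) y ->
    reval (RPrim f g) (n.+1 :: v) y
| evMu f v n : reval f (n :: v) 0 ->
    (forall m, m < n -> exists k, reval f (m :: v) k.+1) -> reval (RMu f) v n
with revals : seq recf -> seq nat -> seq nat -> Prop :=
| evsNil v : revals [::] v [::]
| evsCons g gs v y ys : reval g v y -> revals gs v ys -> revals (g :: gs) v (y :: ys).

(* A (promise) problem with instances in a countable type X, valid instances V,
   and yes-instances P, is decidable if some partial recursive function, applied
   to the (effective) code [pickle x] of any valid instance x, halts with 1 on
   yes-instances and with 0 on no-instances. *)
Definition decidable_on (X : countType) (V P : X -> Prop) : Prop :=
  exists e : recf, forall x : X, V x ->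
    (P x -> reval e [:: pickle x] 1) /\ (~ P x -> reval e [:: pickle x] 0).

Record gstr := GStr {
  gcar :> Type;
  gmul : gcar -> gcar -> gcar;
  ginv : gcar -> gcar;
  gone : gcar }.

Definition is_group (G : gstr) : Prop :=
  [/\ forall x y z : G, gmul x (gmul y z) = gmul (gmul x y) z,
      forall x : G, gmul (gone G) x = x,
      forall x : G, gmul x (gone G) = x,
      forall x : G, gmul (ginv x) x = gone G &
      forall x : G, gmul x (ginv x) = gone G].

(* Words: a letter (i, b) stands for s_i (b = false) or s_i^-1 (b = true). *)
Definition word := seq (nat * bool).

Definition weval (G : gstr) (S : seq G) (w : word) : G :=
  foldr (fun l acc => let g := nth (gone G) S l.1 in
                      gmul (if l.2 then ginv g else g) acc) (gone G) w.

Definition valid_word (n : nat) (w : word) : bool := all (fun l => l.1 < n) w.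

Definition generates (G : gstr) (S : seq G) : Prop :=
  forall g : G, exists w : word, g = weval S w.

Definition in_gen (G : gstr) (S : seq G) (x : G) : Prop :=
  exists w : word, x = weval S w.

Record aut (G : gstr) := Aut {
  af : G -> G;
  ainv : G -> G;
  af_mul : forall x y, af (gmul x y) = gmul (af x) (af y);
  af_K : cancel af ainv;
  ainv_K : cancel ainv af }.

Definition apow (G : gstr) (psi : aut G) (k : int) : G -> G :=
  match k with
  | Posz n => iter n (af psi)
  | Negz n => iter n.+1 (ainv psi)
  end.

(* Semidirect product G x|_psi Z, generated by G and t with t^-1 a t = psi(a).
   The pair (k, g) represents t^k g. *)
Definition sd_mul (G : gstr) (psi : aut G) (x y : int * G) : int * G :=
  ((x.1 + y.1)%R, gmul (apow psi y.1 x.2) y.2).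
Definition sd_inv (G : gstr) (psi : aut G) (x : int * G) : int * G :=
  ((- x.1)%R, apow psi (- x.1)%R (ginv x.2)).
Definition sdprod (G : gstr) (psi : aut G) : gstr :=
  @GStr (int * G)%type (sd_mul psi) (sd_inv psi) (0%R, gone G).

(* generators of G x|_psi Z: index 0 is t, index i.+1 is the i-th generator of G *)
Definition sd_gens (G : gstr) (psi : aut G) (S : seq G) : seq (sdprod psi) :=
  ((1%R, gone G) : sdprod psi) :: map (fun g => ((0%R, g) : sdprod psi)) S.

Definition conjg_ (G : gstr) (x z : G) : G := gmul (gmul (ginv z) x) z.

(* Classes of subsets: f.g. subgroups and cosets of f.g. subgroups.    *)
Inductive klass := FG | Coset.

Definition Kin (c : klass) : countType :=
  match c with
  | FG => seq word                       (* generators of K *)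
  | Coset => (word * seq word)%type      (* y and generators of H, K = yH *)
  end.

Definition Kvalid (n : nat) (c : klass) : Kin c -> Prop :=
  match c with
  | FG => fun ks : seq word => all (valid_word n) ks
  | Coset => fun yh : word * seq word => valid_word n yh.1 && all (valid_word n) yh.2
  end.

Definition Kmem (G : gstr) (S : seq G) (c : klass) : Kin c -> G -> Prop :=
  match c with
  | FG => fun (ks : seq word) x => in_gen (map (weval S) ks) x
  | Coset => fun (yh : word * seq word) x =>
      exists h, in_gen (map (weval S) yh.2) h /\ x = gmul (weval S yh.1) h
  end.

(* an automorphism given by the words imgs, images of the generators *)
Definition aut_matches (G : gstr) (S : seq G) (psi : aut G) (imgs : seq word) : Prop :=
  size imgs = size S /\
  forall i, i < size S -> af psi (nth (gone G) S i) = weval S (nth [::] imgs i).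

Definition aut_valid (G : gstr) (S : seq G) (imgs : seq word) : Prop :=
  all (valid_word (size S)) imgs /\ exists psi : aut G, aut_matches S psi imgs.

(* GCP_C (G x|_phi Z) : input K in C and x, words over t, generators of G *)
Definition GCP_prop (G : gstr) (S : seq G) (psi : aut G) (c : klass)
  (i : Kin c * word) : Prop :=
  exists z : sdprod psi,
    Kmem (sd_gens psi S) i.1 (conjg_ (weval (sd_gens psi S) i.2) z).

Definition GCP_fixed (G : gstr) (S : seq G) (phi : aut G) (c : klass) : Prop :=
  @decidable_on (Kin c * word)%type
    (fun i => Kvalid (size S).+1 i.1 /\ valid_word (size S).+1 i.2)
    (@GCP_prop G S phi c).

(* uniform version: the automorphism is part of the input *)
Definition GCP_unif (G : gstr) (S : seq G) (c : klass) : Prop :=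
  @decidable_on (seq word * (Kin c * word))%type
    (fun i => aut_valid S i.1 /\ Kvalid (size S).+1 i.2.1 /\ valid_word (size S).+1 i.2.2)
    (fun i => exists psi : aut G, aut_matches S psi i.1 /\ @GCP_prop G S psi c i.2).

Definition GBrCP_prop (G : gstr) (S : seq G) (psi : aut G) (c : klass)
  (i : Kin c * word) : Prop :=
  exists (k : int) (z : G), Kmem S i.1 (conjg_ (apow psi k (weval S i.2)) z).

Definition GTCP_prop (G : gstr) (S : seq G) (psi : aut G) (c : klass)
  (i : Kin c * word) : Prop :=
  exists z : G, Kmem S i.1 (gmul (gmul (ginv (af psi z)) (weval S i.2)) z).

Definition Gproblem_fixed (G : gstr) (S : seq G) (phi : aut G) (c : klass)
  (P : aut G -> Kin c * word -> Prop) : Prop :=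
  @decidable_on (Kin c * word)%type
    (fun i => Kvalid (size S) i.1 /\ valid_word (size S) i.2)
    (P phi).

Definition Gproblem_unif (G : gstr) (S : seq G) (c : klass)
  (P : aut G -> Kin c * word -> Prop) : Prop :=
  @decidable_on (seq word * (Kin c * word))%type
    (fun i => aut_valid S i.1 /\ Kvalid (size S) i.2.1 /\ valid_word (size S) i.2.2)
    (fun i => exists psi : aut G, aut_matches S psi i.1 /\ P psi i.2).

Definition GBrCP_fixed (G : gstr) (S : seq G) (phi : aut G) (c : klass) : Prop :=
  Gproblem_fixed S phi (fun psi => @GBrCP_prop G S psi c).
Definition GBrCP_unif (G : gstr) (S : seq G) (c : klass) : Prop :=
  Gproblem_unif S (fun psi => @GBrCP_prop G S psi c).
Definition GTCP_fixed (G : gstr) (S : seq G) (phi : aut G) (c : klass) : Prop :=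
  Gproblem_fixed S phi (fun psi => @GTCP_prop G S psi c).
Definition GTCP_unif (G : gstr) (S : seq G) (c : klass) : Prop :=
  Gproblem_unif S (fun psi => @GTCP_prop G S psi c).

(* Main.v *)
Require Import Defs.
From mathcomp Require Import all_boot all_order all_algebra.
From mathcomp Require Import zify.
Set Implicit Arguments. Unset Strict Implicit. Unset Printing Implicit Defensive.

Lemma rcomp0 f v y : reval f [::] y -> reval (RComp f [::]) v y.
Proof. by move=> H; apply: evComp H; constructor. Qed.
Lemma rcomp1 f g v y1 y : reval g v y1 -> reval f [:: y1] y -> reval (RComp f [:: g]) v y.
Proof. by move=> H1 H; apply: evComp H; do !constructor. Qed.
Lemma rcomp2 f g1 g2 v y1 y2 y : reval g1 v y1 -> reval g2 v y2 ->
  reval f [:: y1; y2] y -> reval (RComp f [:: g1; g2]) v y.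
Proof. by move=> H1 H2 H; apply: evComp H; do !constructor. Qed.
Lemma rproj i v y : y = nth 0 v i -> reval (RProj i) v y.
Proof. by move=> ->; constructor. Qed.

Lemma rprim f g v (F : nat -> nat) : reval f v (F 0) ->
  (forall n, reval g (n :: F n :: v) (F n.+1)) -> forall n, reval (RPrim f g) (n :: v) (F n).
Proof. move=> H0 HS; elim=> [|n IH]; first by constructor. exact: evPrimS IH (HS n). Qed.

Lemma rmu f v (F : nat -> nat) n : (forall m, reval f (m :: v) (F m)) -> F n = 0 ->
  (forall m, m < n -> 0 < F m) -> reval (RMu f) v n.
Proof.
move=> Hf Hn Hlt; apply: evMu; first by rewrite -Hn.
by move=> m /Hlt; exists (F m).-1; rewrite prednK.
Qed.

Fixpoint constf n := if n is n'.+1 then RComp RSucc [:: constf n'] else RZero.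
Lemma constfP n v : reval (constf n) v n.
Proof. elim: n v => [|n IH] v /=; first by constructor. by apply: rcomp1 (IH v) _; constructor. Qed.

Definition raddf := RPrim (RProj 0) (RComp RSucc [:: RProj 1]).
Lemma raddfP a b : reval raddf [:: a; b] (a + b).
Proof.
apply: (rprim (F := fun a => a + b)) => [|n]; first exact: rproj.
by apply: rcomp1; [exact: rproj | rewrite addSn; constructor].
Qed.

Definition rmulf := RPrim RZero (RComp raddf [:: RProj 1; RProj 2]).
Lemma rmulfP a b : reval rmulf [:: a; b] (a * b).
Proof.
apply: (rprim (F := fun a => a * b)) => [|n]; first by constructor.
by apply: rcomp2; [exact: rproj | exact: rproj | rewrite mulSn addnC; apply: raddfP].
Qed.

Definition predf := RPrim RZero (RProj 0).
Lemma predfP a : reval predf [:: a] a.-1.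
Proof. apply: (rprim (F := fun a => a.-1)) => [|n]; first by constructor. exact: rproj. Qed.

Definition subrf := RPrim (RProj 0) (RComp predf [:: RProj 1]).
Definition subf := RComp subrf [:: RProj 1; RProj 0].
Lemma subfP a b : reval subf [:: a; b] (a - b).
Proof.
apply: rcomp2; [exact: rproj | exact: rproj |].
apply: (rprim (F := fun b => a - b)) => [|n]; first by rewrite subn0; exact: rproj.
by apply: rcomp1; [exact: rproj | rewrite subnS; apply: predfP].
Qed.

Definition pow2f := RPrim (constf 1) (RComp raddf [:: RProj 1; RProj 1]).
Lemma pow2fP k : reval pow2f [:: k] (2 ^ k).
Proof.
apply: (rprim (F := fun k => 2 ^ k)) => [|n]; first exact: constfP.
by apply: rcomp2; [exact: rproj | exact: rproj | rewrite expnS mul2n -addnn; apply: raddfP].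
Qed.

Definition sgf := RPrim RZero (constf 1).
Lemma sgfP a : reval sgf [:: a] (0 < a).
Proof. apply: (rprim (F := fun a => nat_of_bool (0 < a))) => [|n]; [constructor | exact: constfP]. Qed.

(* div c d = least q with (q+1) d > c *)
Definition divf := RMu (RComp subf [:: RComp RSucc [:: RProj 1];
                                      RComp rmulf [:: RComp RSucc [:: RProj 0]; RProj 2]]).
Lemma divfP c d : 0 < d -> reval divf [:: c; d] (c %/ d).
Proof.
move=> d0; apply: (rmu (F := fun q => c.+1 - q.+1 * d)).
- move=> m; apply: rcomp2; last exact: subfP.
    by apply: rcomp1; [exact: rproj | constructor].
  apply: rcomp2; last exact: rmulfP; last exact: rproj.
  by apply: rcomp1; [exact: rproj | constructor].
- by apply/eqP; rewrite subn_eq0 ltn_ceil.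
- by move=> m lt; rewrite subn_gt0 ltnS -leq_divRL.
Qed.

Lemma rcomp3 f g1 g2 g3 v y1 y2 y3 y : reval g1 v y1 -> reval g2 v y2 -> reval g3 v y3 ->
  reval f [:: y1; y2; y3] y -> reval (RComp f [:: g1; g2; g3]) v y.
Proof. by move=> H1 H2 H3 H; apply: evComp H; do !constructor. Qed.

Lemma rprim_le f g v (F : nat -> nat) N : reval f v (F 0) ->
  (forall n, n < N -> reval g (n :: F n :: v) (F n.+1)) ->
  forall n, n <= N -> reval (RPrim f g) (n :: v) (F n).
Proof.
move=> H0 HS; elim=> [|n IH] lt; first by constructor.
exact: evPrimS (IH (ltnW lt)) (HS n lt).
Qed.

Definition P0 := RProj 0. Definition P1 := RProj 1. Definition P2 := RProj 2.
Definition c1 f g := RComp f [:: g].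
Definition c2 f g h := RComp f [:: g; h].

Definition oddf := c2 subf P0 (c2 rmulf (c2 divf P0 (constf 2)) (constf 2)).
Lemma oddfP c : reval oddf [:: c] (odd c).
Proof.
have -> : nat_of_bool (odd c) = c - c %/ 2 * 2 by rewrite -modn2 {2}(divn_eq c 2) addKn.
apply: rcomp2; [exact: rproj | | exact: subfP].
  apply: rcomp2; [| exact: constfP | exact: rmulfP].
  by apply: rcomp2; [exact: rproj | exact: constfP | exact: divfP].
Qed.

Definition hdf := RMu (c2 rmulf (c2 subf (constf 1) (c1 oddf (c2 divf P1 (c1 pow2f P0))))
                                 (c2 subf P1 P0)).
Lemma hdF_eval c k : reval (c2 rmulf (c2 subf (constf 1) (c1 oddf (c2 divf P1 (c1 pow2f P0))))
                                 (c2 subf P1 P0)) [:: k; c] ((1 - odd (c %/ 2 ^ k)) * (c - k)).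
Proof.
apply: rcomp2; last exact: rmulfP.
  apply: rcomp2; [exact: constfP | | exact: subfP].
  apply: rcomp1; last exact: oddfP.
  apply: rcomp2; [exact: rproj | | apply: divfP; exact: expn_gt0].
  by apply: rcomp1; [exact: rproj | exact: pow2fP].
by apply: rcomp2; [exact: rproj | exact: rproj | exact: subfP].
Qed.

Lemma hdfP0 : reval hdf [:: 0] 0.
Proof. apply: (rmu (F := fun k => (1 - odd (0 %/ 2 ^ k)) * (0 - k))) => //.
move=> m; exact: hdF_eval. Qed.

Lemma hdfP n m : reval hdf [:: 2 ^ n * m.*2.+1] n.
Proof.
set c := 2 ^ n * m.*2.+1.
apply: (rmu (F := fun k => (1 - odd (c %/ 2 ^ k)) * (c - k))).
- move=> k; exact: hdF_eval.
- by rewrite /c mulKn ?expn_gt0 //= odd_double.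
- move=> k lt; have Hc: c = 2 ^ k * (2 ^ (n - k) * m.*2.+1).
    by rewrite /c mulnA -expnD subnKC // ltnW.
  have Ho : odd (2 ^ (n - k) * m.*2.+1) = false.
    by rewrite oddM oddX /= orbF subn_eq0 leqNgt lt.
  have Hn : n < c by apply: (leq_trans (ltn_expl n (ltnSn 1))); rewrite /c leq_pmulr.
  rewrite {1}Hc mulKn ?expn_gt0 // Ho /= mul1n subn_gt0.
  exact: ltn_trans lt Hn.
Qed.

Lemma code_cons n s : CodeSeq.code (n :: s) = 2 ^ n * (CodeSeq.code s).*2.+1.
Proof. by []. Qed.

Lemma hdfC n s : reval hdf [:: CodeSeq.code (n :: s)] n.
Proof. exact: hdfP. Qed.

Definition tlf := c2 divf P0 (c1 pow2f (c1 RSucc hdf)).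
Lemma tlfC n s : reval tlf [:: CodeSeq.code (n :: s)] (CodeSeq.code s).
Proof.
apply: rcomp2; [exact: rproj | |].
  apply: rcomp1; last exact: pow2fP.
  by apply: rcomp1; [exact: hdfC | constructor].
rewrite code_cons; have E : CodeSeq.code s = (2 ^ n * (CodeSeq.code s).*2.+1) %/ 2 ^ n.+1.
  by rewrite expnSr divnMl ?expn_gt0 //; lia.
by rewrite [X in reval _ _ X]E; apply: divfP; exact: expn_gt0.
Qed.
Lemma tlf0 : reval tlf [:: 0] 0.
Proof.
apply: (@rcomp2 _ _ _ _ 0 2); [exact: rproj | |].
  apply: (@rcomp1 _ _ _ 1); last exact: (pow2fP 1).
  by apply: rcomp1; [exact: hdfP0 | constructor].
exact: (@divfP 0 2 isT).
Qed.
Lemma tlfP s : reval tlf [:: CodeSeq.code s] (CodeSeq.code (behead s)).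
Proof. case: s => [|n s]; [exact: tlf0 | exact: tlfC]. Qed.

Definition consf := c2 rmulf (c1 pow2f P0) (c1 RSucc (c2 raddf P1 P1)).
Lemma consfP x c : reval consf [:: x; c] (2 ^ x * c.*2.+1).
Proof.
apply: rcomp2; last exact: rmulfP.
  by apply: rcomp1; [exact: rproj | exact: pow2fP].
apply: rcomp1; last by constructor.
by apply: rcomp2; [exact: rproj | exact: rproj | rewrite -addnn; exact: raddfP].
Qed.
Lemma consfC x s : reval consf [:: x; CodeSeq.code s] (CodeSeq.code (x :: s)).
Proof. exact: consfP. Qed.

Definition condf := c2 raddf (c2 rmulf P1 (c2 subf (constf 1) (c1 sgf P0)))
                            (c2 rmulf P2 (c1 sgf P0)).
Lemma condfP z a b : reval condf [:: z; a; b] (if z == 0 then a else b).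
Proof.
have Hs : reval (c1 sgf P0) [:: z; a; b] (0 < z) by apply: rcomp1; [exact: rproj | exact: sgfP].
apply: (@rcomp2 _ _ _ _ (a * (1 - (0 < z))) (b * (0 < z))).
- apply: rcomp2; [exact: rproj | | exact: rmulfP].
  by apply: rcomp2; [exact: constfP | exact: Hs | exact: subfP].
- by apply: rcomp2; [exact: rproj | exact: Hs | exact: rmulfP].
have -> : (if z == 0 then a else b) = a * (1 - (0 < z)) + b * (0 < z).
  by case: z {Hs} => [|z] /=; rewrite ?muln0 ?muln1 ?addn0 ?add0n ?subnn ?muln0.
exact: raddfP.
Qed.

Lemma condfP0 a b : reval condf [:: 0; a; b] a.
Proof. exact: (condfP 0 a b). Qed.
Lemma condfPn z a b : 0 < z -> reval condf [:: z; a; b] b.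
Proof. by case: z => // z _; exact: (condfP z.+1 a b). Qed.

Definition dropf := RPrim P0 (c1 tlf P1).
Lemma dropfP k s : reval dropf [:: k; CodeSeq.code s] (CodeSeq.code (drop k s)).
Proof.
apply: (rprim (F := fun k => CodeSeq.code (drop k s))) => [|n].
  by rewrite drop0; exact: rproj.
apply: rcomp1; first exact: rproj.
by rewrite /= -add1n -drop_drop drop1; exact: tlfP.
Qed.

Lemma size_code s : size s <= CodeSeq.code s.
Proof.
elim: s => [|n s IH] //; rewrite code_cons /=.
apply: (leq_trans _ (leq_pmull _ (expn_gt0 2 n))); rewrite ltnS -addnn.
exact: (leq_trans IH (leq_addr _ _)).
Qed.

Definition mapR := c2 dropf (c2 subf P2 (c1 RSucc P0)) P2.
Definition mapstep gf := RComp condf [:: mapR; P1; c2 consf (c1 gf (c1 hdf mapR)) P1].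
Definition mapf gf := c2 (RPrim RZero (mapstep gf)) P0 P0.

Lemma mapfP gf (G : nat -> nat) : (forall x, reval gf [:: x] (G x)) ->
  forall s, reval (mapf gf) [:: CodeSeq.code s] (CodeSeq.code (map G s)).
Proof.
move=> HG s; set c := CodeSeq.code s.
apply: rcomp2; [exact: rproj | exact: rproj |].
have -> : CodeSeq.code (map G s) = CodeSeq.code (map G (drop (c - c) s)) by rewrite subnn drop0.
apply: (@rprim_le _ _ _ (fun j => CodeSeq.code (map G (drop (c - j) s))) c) => //.
  by rewrite subn0 drop_oversize ?size_code //; constructor.
move=> j lt /=.
have HR : reval mapR [:: j; CodeSeq.code (map G (drop (c - j) s)); c]
            (CodeSeq.code (drop (c - j.+1) s)).
  apply: rcomp2; [| exact: rproj | exact: dropfP].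
  apply: rcomp2; [exact: rproj | | exact: subfP].
  by apply: rcomp1; [exact: rproj | constructor].
have Ed : c - j = (c - j.+1).+1 by rewrite subnS prednK // subn_gt0.
have Ed2 : drop (c - j) s = behead (drop (c - j.+1) s) by rewrite Ed -drop1 drop_drop add1n.
rewrite Ed2 in HR *.
case E: (drop (c - j.+1) s) HR => [|x t] HR /=.
  apply: (@rcomp3 _ _ _ _ _ 0 0 (2 ^ G 0 * 1)); [exact: HR | exact: rproj | |].
  2: exact: (condfP 0 0 (2 ^ G 0 * 1)).
  apply: (@rcomp2 _ _ _ _ (G 0) 0); [| exact: rproj | exact: (consfP (G 0) 0)].
  by apply: rcomp1; [apply: rcomp1; [exact: HR | exact: hdfP0] | exact: HG].
apply: rcomp3; [exact: HR | exact: rproj | | apply: condfPn; by rewrite code_cons muln_gt0 expn_gt0].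
apply: rcomp2; [| exact: rproj | exact: consfC].
by apply: rcomp1; [apply: rcomp1; [exact: HR | exact: hdfC] | exact: HG].
Qed.

Definition shl (l : nat * bool) : nat * bool := (l.1.+1, l.2).
Definition shw (w : word) : word := map shl w.
Definition shs (ks : seq word) : seq word := map shw ks.
Definition tlet : nat * bool := (0, false).

Definition dblf := c2 raddf P0 P0.
Lemma dblfP x : reval dblf [:: x] (x + x).
Proof. by apply: rcomp2; [exact: rproj | exact: rproj | exact: raddfP]. Qed.

Lemma pickle_shl l : pickle (shl l) = pickle l + pickle l.
Proof.
case: l => i b.
change (CodeSeq.code [:: i.+1; nat_of_bool b] = CodeSeq.code [:: i; nat_of_bool b] + CodeSeq.code [:: i; nat_of_bool b]).
by rewrite !code_cons expnS -mulnA mul2n -addnn.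
Qed.

Definition shwf := mapf dblf.
Lemma shwfP w : reval shwf [:: pickle w] (pickle (shw w)).
Proof.
change (reval shwf [:: CodeSeq.code (map pickle w)] (CodeSeq.code (map pickle (shw w)))).
have -> : map pickle (shw w) = map (fun x => x + x) (map pickle w).
  by rewrite /shw -!map_comp; apply: eq_map => l /=; rewrite pickle_shl.
apply: mapfP; exact: dblfP.
Qed.

Lemma mapfP' gf (G : nat -> nat) : (forall x, reval gf [:: x] (G x)) ->
  forall x, reval (mapf gf) [:: x] (CodeSeq.code (map G (CodeSeq.decode x))).
Proof. move=> HG x; have := mapfP HG (CodeSeq.decode x); by rewrite CodeSeq.decodeK. Qed.

Lemma shwfP' x : reval shwf [:: x] (CodeSeq.code (map (fun x => x + x) (CodeSeq.decode x))).
Proof. apply: mapfP'; exact: dblfP. Qed.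

Definition shsf := mapf shwf.
Lemma shsfP (ks : seq word) : reval shsf [:: pickle ks] (pickle (shs ks)).
Proof.
change (reval shsf [:: CodeSeq.code (map pickle ks)] (CodeSeq.code (map pickle (shs ks)))).
have -> : map pickle (shs ks) = map (fun c => CodeSeq.code (map (fun x => x + x) (CodeSeq.decode c))) (map pickle ks).
  rewrite /shs -!map_comp; apply: eq_map => w /=.
  change (CodeSeq.code (map pickle (shw w)) = CodeSeq.code (map (fun x => x + x) (CodeSeq.decode (CodeSeq.code (map pickle w))))).
  by rewrite CodeSeq.codeK /shw -!map_comp; congr CodeSeq.code; apply: eq_map => l /=; rewrite pickle_shl.
apply: mapfP; exact: shwfP'.
Qed.

Definition pairf a b := c2 consf a (c2 consf b RZero).
Lemma pairfP (X Y : countType) v a b (x : X) (y : Y) :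
  reval a v (pickle x) -> reval b v (pickle y) -> reval (pairf a b) v (pickle (x, y)).
Proof.
move=> Ha Hb; change (reval (pairf a b) v (CodeSeq.code [:: pickle x; pickle y])).
apply: rcomp2; [exact: Ha | | exact: consfC].
by apply: rcomp2; [exact: Hb | constructor | exact: (consfC _ [::])].
Qed.

Definition fstf g := c1 hdf g.
Definition sndf g := c1 hdf (c1 tlf g).
Lemma fstfP (X Y : countType) v g (x : X) (y : Y) :
  reval g v (pickle (x, y)) -> reval (fstf g) v (pickle x).
Proof. move=> H; apply: rcomp1 H _; exact: hdfC. Qed.
Lemma sndfP (X Y : countType) v g (x : X) (y : Y) :
  reval g v (pickle (x, y)) -> reval (sndf g) v (pickle y).
Proof.
move=> H; apply: rcomp1; last exact: (hdfC _ [::]).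
by apply: rcomp1 H _; exact: tlfC.
Qed.
Lemma shwfP2 v g (w : word) : reval g v (pickle w) -> reval (c1 shwf g) v (pickle (shw w)).
Proof. move=> H; apply: rcomp1 H _; exact: shwfP. Qed.
Lemma shsfP2 v g (w : seq word) : reval g v (pickle w) -> reval (c1 shsf g) v (pickle (shs w)).
Proof. move=> H; apply: rcomp1 H _; exact: shsfP. Qed.

Definition tconsf f := c2 consf (constf 3) f.
Lemma tconsfP v f (w : word) : reval f v (pickle w) -> reval (tconsf f) v (pickle (tlet :: w)).
Proof.
move=> H; change (reval (tconsf f) v (CodeSeq.code (3 :: map pickle w))).
apply: rcomp2; [exact: constfP | exact: H | exact: consfC].
Qed.

Definition TFG (i : Kin FG * word) : Kin FG * word := (shs i.1, shw i.2).
Definition TCB (i : Kin Coset * word) : Kin Coset * word := ((shw i.1.1, shs i.1.2), shw i.2).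
Definition TCT (i : Kin Coset * word) : Kin Coset * word :=
  ((tlet :: shw i.1.1, shs i.1.2), tlet :: shw i.2).
Definition TU (X : Type) (T : X -> X) (i : seq word * X) : seq word * X := (i.1, T i.2).

Definition TFGf g := pairf (c1 shsf (fstf g)) (c1 shwf (sndf g)).
Lemma TFGfP v g (i : Kin FG * word) : reval g v (pickle i) -> reval (TFGf g) v (pickle (TFG i)).
Proof.
case: i => ks x H; apply: pairfP.
  exact: shsfP2 (fstfP H).
exact: shwfP2 (sndfP H).
Qed.

Definition TCBf g := pairf (pairf (c1 shwf (fstf (fstf g))) (c1 shsf (sndf (fstf g)))) (c1 shwf (sndf g)).
Lemma TCBfP v g (i : Kin Coset * word) : reval g v (pickle i) -> reval (TCBf g) v (pickle (TCB i)).
Proof.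
case: i => [[y hs] x] H; apply: pairfP; last exact: shwfP2 (sndfP H).
have H1 := fstfP H; apply: pairfP.
  exact: shwfP2 (fstfP H1).
exact: shsfP2 (sndfP H1).
Qed.

Definition TCTf g := pairf (pairf (tconsf (c1 shwf (fstf (fstf g)))) (c1 shsf (sndf (fstf g))))
                           (tconsf (c1 shwf (sndf g))).
Lemma TCTfP v g (i : Kin Coset * word) : reval g v (pickle i) -> reval (TCTf g) v (pickle (TCT i)).
Proof.
case: i => [[y hs] x] H; apply: pairfP; last exact: tconsfP (shwfP2 (sndfP H)).
have H1 := fstfP H; apply: pairfP.
  exact: tconsfP (shwfP2 (fstfP H1)).
exact: shsfP2 (sndfP H1).
Qed.

Definition TUf (Tf : recf -> recf) g := pairf (fstf g) (Tf (sndf g)).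
Lemma TUfP (X : countType) (T : X -> X) Tf
  (HT : forall v g i, reval g v (pickle i) -> reval (Tf g) v (pickle (T i))) v g (i : seq word * X) :
  reval g v (pickle i) -> reval (TUf Tf g) v (pickle (TU T i)).
Proof.
case: i => imgs i H; apply: pairfP; first exact: fstfP H.
exact: HT (sndfP H).
Qed.

Lemma transfer (X Y : countType) (VX PX : X -> Prop) (VY PY : Y -> Prop) (f : Y -> X)
  (Ff : recf -> recf) :
  (forall v g y, reval g v (pickle y) -> reval (Ff g) v (pickle (f y))) ->
  (forall y, VY y -> VX (f y) /\ (PX (f y) <-> PY y)) ->
  decidable_on VX PX -> decidable_on VY PY.
Proof.
move=> HF HV [e He]; exists (RComp e [:: Ff P0]) => y /HV [/He [H1 H2] Hiff].
have Hf : reval (Ff P0) [:: pickle y] (pickle (f y)) by apply: HF; exact: rproj.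
split=> Hy; apply: rcomp1 Hf _; [apply: H1 | apply: H2]; rewrite Hiff //.
Qed.

Section Grp.
Variable G : gstr.
Hypothesis HG : is_group G.
Local Notation "x * y" := (gmul x y).
Local Notation "1" := (gone G).

Lemma gA (x y z : G) : x * (y * z) = (x * y) * z. Proof. by case: HG. Qed.
Lemma g1x (x : G) : 1 * x = x. Proof. by case: HG. Qed.
Lemma gx1 (x : G) : x * 1 = x. Proof. by case: HG. Qed.
Lemma gVx (x : G) : ginv x * x = 1. Proof. by case: HG. Qed.
Lemma gxV (x : G) : x * ginv x = 1. Proof. by case: HG. Qed.

Lemma ginv_uniq (x y : G) : x * y = 1 -> y = ginv x.
Proof.
move=> H; have : ginv x * (x * y) = ginv x * 1 by rewrite H.
by rewrite gA gVx g1x gx1.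
Qed.
Lemma ginvK (x : G) : ginv (ginv x) = x.
Proof. by symmetry; apply: ginv_uniq; rewrite gVx. Qed.
Lemma ginvM (x y : G) : ginv (x * y) = ginv y * ginv x.
Proof. by symmetry; apply: ginv_uniq; rewrite gA -(gA x) gxV gx1 gxV. Qed.
Lemma ginv1 : ginv 1 = 1.
Proof. by symmetry; apply: ginv_uniq; rewrite g1x. Qed.

Variable psi : aut G.
Local Notation af := (af psi).
Local Notation ai := (ainv psi).

Lemma af1 : af 1 = 1.
Proof.
have H : af 1 * af 1 = af 1 by rewrite -af_mul g1x.
have : ginv (af 1) * (af 1 * af 1) = ginv (af 1) * af 1 by rewrite H.
by rewrite gA gVx g1x.
Qed.
Lemma afV (x : G) : af (ginv x) = ginv (af x).
Proof. by apply: ginv_uniq; rewrite -af_mul gxV af1. Qed.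
Lemma aiM (x y : G) : ai (x * y) = ai x * ai y.
Proof. by apply: (can_inj (af_K psi)); rewrite af_mul !ainv_K. Qed.

Lemma iterM (f : G -> G) : (forall x y, f (x * y) = f x * f y) ->
  forall n x y, iter n f (x * y) = iter n f x * iter n f y.
Proof. by move=> fM; elim=> [|n IH] x y //=; rewrite IH fM. Qed.

Lemma apowM k (x y : G) : apow psi k (x * y) = apow psi k x * apow psi k y.
Proof. case: k => n; rewrite /apow; [apply: iterM; exact: af_mul | apply: iterM; exact: aiM]. Qed.

Lemma apow_af k (y : G) : apow psi k (af y) = af (apow psi k y).
Proof.
case: k => n; rewrite /apow.
  by elim: n => [|m IH] //=; rewrite IH.
by elim: n.+1 => [|m IH] //=; rewrite IH ainv_K af_K.
Qed.

Lemma iter_can (f g : G -> G) : cancel g f -> forall n y, iter n f (iter n g y) = y.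
Proof. by move=> K; elim=> [|n IH] y //; rewrite iterSr iterS K IH. Qed.

Lemma apowK k (y : G) : apow psi k (apow psi (- k)%R y) = y.
Proof.
case: k => [[|n]|n] //=.
- change (iter n.+1 af (iter n.+1 ai y) = y); apply: iter_can; exact: ainv_K.
- change (iter n.+1 ai (iter n.+1 af y) = y); apply: iter_can; exact: af_K.
Qed.

Definition tw (X Y : G) := exists w, Y = ginv (af w) * X * w.

Lemma tw_comp (X w v : G) :
  ginv (af v) * (ginv (af w) * X * w) * v = ginv (af (w * v)) * X * (w * v).
Proof. by rewrite af_mul ginvM !gA. Qed.

Lemma tw_refl X : tw X X.
Proof. by exists 1; rewrite af1 ginv1 g1x gx1. Qed.
Lemma tw_af X Y : tw X Y -> tw X (af Y).
Proof.
move=> [w ->]; set Z := _ * _ * _; exists (w * ginv Z); rewrite -tw_comp -/Z.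
by rewrite afV ginvK -gA gxV gx1.
Qed.
Lemma tw_ai X Y : tw X Y -> tw X (ai Y).
Proof.
move=> [w ->]; set Z := _ * _ * _; exists (w * ai Z); rewrite -tw_comp -/Z.
by rewrite ainv_K gVx g1x.
Qed.
Lemma tw_apow k X : tw X (apow psi k X).
Proof.
case: k => n; rewrite /apow.
  by elim: n => [|m IH] /=; [exact: tw_refl | exact: tw_af].
by elim: n.+1 => [|m IH] /=; [exact: tw_refl | exact: tw_ai].
Qed.
End Grp.

Import GRing.Theory.

Section SD.
Variable G : gstr.
Hypothesis HG : is_group G.
Variable psi : aut G.
Variable S : seq G.
Local Notation SG := (sdprod psi).

Definition inj0 (g : G) : SG := (0%R, g).

Lemma sdmul00 (a b : G) : sd_mul psi (inj0 a) (inj0 b) = inj0 (gmul a b).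
Proof. by rewrite /inj0 /= /sd_mul /= addr0. Qed.
Lemma sdinv0 (a : G) : sd_inv psi (inj0 a) = inj0 (ginv a).
Proof. by rewrite /inj0 /= /sd_inv /= oppr0. Qed.

Lemma nth_inj0 (L : seq G) i : nth (gone SG) (map inj0 L) i = inj0 (nth (gone G) L i).
Proof.
case: (ltnP i (size L)) => H; first by rewrite (nth_map (gone G)).
by rewrite !nth_default ?size_map.
Qed.

Lemma weval_inj0 (L : seq G) w : weval (map inj0 L) w = inj0 (weval L w).
Proof.
elim: w => [|[i b] w IH] //=; rewrite IH nth_inj0.
by case: b; rewrite ?sdinv0 sdmul00.
Qed.

Lemma weval_sh w : weval (sd_gens psi S) (shw w) = inj0 (weval S w).
Proof.
rewrite -weval_inj0; elim: w => [|[i b] w IH] //=; by rewrite IH.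
Qed.

Lemma map_weval_sh (ks : seq word) :
  map (weval (sd_gens psi S)) (shs ks) = map inj0 (map (weval S) ks).
Proof. by rewrite /shs -!map_comp; apply: eq_map => w /=; rewrite weval_sh. Qed.

Lemma in_gen_inj0 (L : seq G) (a : int) (b : G) :
  in_gen (map inj0 L) ((a, b) : SG) <-> a = 0%R /\ in_gen L b.
Proof.
split.
  by move=> [w]; rewrite weval_inj0 => -[-> ->]; split => //; exists w.
by move=> [-> [w ->]]; exists w; rewrite weval_inj0.
Qed.

Lemma conj0 (X : G) (k : int) (g : G) :
  sd_mul psi (sd_mul psi (sd_inv psi (k, g)) (inj0 X)) (k, g) = inj0 (conjg_ (apow psi k X) g).
Proof.
rewrite /inj0 /= /sd_mul /sd_inv /=; congr pair.
  by rewrite addr0 addNr.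
by rewrite apowM // apowK.
Qed.

Lemma conj1 (X : G) (k : int) (g : G) :
  sd_mul psi (sd_mul psi (sd_inv psi (k, g)) (1%R, X)) (k, g) =
  (1%R, gmul (gmul (ginv (af psi g)) (apow psi k X)) g).
Proof.
rewrite /= /sd_mul /sd_inv /=; congr pair.
  by rewrite addrC addrA addrN add0r.
rewrite apowM // apow_af apowK afV //.
Qed.

Lemma weval_t w : weval (sd_gens psi S) (tlet :: shw w) = ((1%R, weval S w) : SG).
Proof.
rewrite [weval _ _]/= weval_sh /= /sd_mul /= addr0; congr pair.
by rewrite (g1x HG).
Qed.

Lemma eqFG i : GCP_prop S psi (TFG i) <-> GBrCP_prop S psi i.
Proof.
case: i => ks x; rewrite /GCP_prop /GBrCP_prop /= map_weval_sh weval_sh.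
split.
  move=> [[k g]]; rewrite conj0 => /in_gen_inj0 [_ H]; by exists k, g.
by move=> [k [g H]]; exists (k, g); rewrite conj0; apply/in_gen_inj0.
Qed.

Lemma eqCB i : GCP_prop S psi (TCB i) <-> GBrCP_prop S psi i.
Proof.
case: i => [[y hs] x]; rewrite /GCP_prop /GBrCP_prop /= map_weval_sh !weval_sh.
split.
  move=> [[k g]]; rewrite conj0 => -[[a b]] [/in_gen_inj0 [-> H]].
  rewrite -/(inj0 b) sdmul00 => -[E]; exists k, g, b; by split.
move=> [k [g [b [H E]]]]; exists (k, g); rewrite conj0; exists (inj0 b).
by split; [apply/in_gen_inj0 | rewrite sdmul00 E].
Qed.

Lemma eqCT i : GCP_prop S psi (TCT i) <-> GTCP_prop S psi i.
Proof.
case: i => [[y hs] x]; have Ex := weval_t x; have Ey := weval_t y.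
rewrite /= in Ex Ey; rewrite /GCP_prop /GTCP_prop /= map_weval_sh Ex Ey.
split.
  move=> [[k g]]; rewrite conj1 => -[[a b]] [/in_gen_inj0 [-> H]].
  rewrite /= /sd_mul /= addr0 => -[E].
  have [w Ew] := tw_apow HG psi k (weval S x).
  exists (gmul w g), b; split => //; rewrite -tw_comp // -Ew E.
  by rewrite /apow /= .
move=> [z [b [H E]]]; exists (0%R, z); rewrite conj1; exists (inj0 b).
split; first by apply/in_gen_inj0.
by rewrite /= /sd_mul /= addr0 E.
Qed.
End SD.

Lemma valid_shw n w : valid_word n w -> valid_word n.+1 (shw w).
Proof. by rewrite /valid_word /shw all_map. Qed.
Lemma valid_shs n ks : all (valid_word n) ks -> all (valid_word n.+1) (shs ks).
Proof. rewrite /shs all_map => /allP H; apply/allP => w /H; exact: valid_shw. Qed.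

Theorem corollary3p4 (G : gstr) (HG : is_group G) (S : seq G)
  (HS : generates S) (phi : aut G) :
  (GCP_fixed S phi FG -> GBrCP_fixed S phi FG) /\
  (GCP_unif S FG -> GBrCP_unif S FG) /\
  (GCP_fixed S phi Coset -> GBrCP_fixed S phi Coset /\ GTCP_fixed S phi Coset) /\
  (GCP_unif S Coset -> GBrCP_unif S Coset /\ GTCP_unif S Coset).
Proof.
split; [|split; [|split]].
- apply: (transfer (f := TFG) (Ff := TFGf)); first exact: TFGfP.
  move=> [ks x] [V1 V2]; split; first by split; [exact: valid_shs | exact: valid_shw].
  exact: eqFG phi S _.
- apply: (transfer (f := TU TFG) (Ff := TUf TFGf)).
    apply: TUfP; exact: TFGfP.
  move=> [imgs [ks x]] [V0 [V1 V2]]; split.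
    by split => //; split; [exact: valid_shs | exact: valid_shw].
  by split=> -[psi [M H]]; exists psi; split => //; first [exact: (proj1 (eqFG psi S _) H) | exact: (proj2 (eqFG psi S _) H)].
- move=> H; split.
  + apply: (transfer (f := TCB) (Ff := TCBf)) H; first exact: TCBfP.
    move=> [[y hs] x] [/andP [V1 V1'] V2]; split.
      by split; [apply/andP; split; [exact: valid_shw | exact: valid_shs] | exact: valid_shw].
    exact: eqCB phi S _.
  + apply: (transfer (f := TCT) (Ff := TCTf)) H; first exact: TCTfP.
    move=> [[y hs] x] [/andP [V1 V1'] V2]; split.
      by split; [apply/andP; split; [exact: valid_shw | exact: valid_shs] | exact: valid_shw].
    exact: eqCT HG phi S _.
- move=> H; split.
  + apply: (transfer (f := TU TCB) (Ff := TUf TCBf)) H; first by apply: TUfP; exact: TCBfP.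
    move=> [imgs [[y hs] x]] [V0 [/andP [V1 V1'] V2]]; split.
      by split => //; split; [apply/andP; split; [exact: valid_shw | exact: valid_shs] | exact: valid_shw].
    by split=> -[psi [M H]]; exists psi; split => //; first [exact: (proj1 (eqCB psi S _) H) | exact: (proj2 (eqCB psi S _) H)].
  + apply: (transfer (f := TU TCT) (Ff := TUf TCTf)) H; first by apply: TUfP; exact: TCTfP.
    move=> [imgs [[y hs] x]] [V0 [/andP [V1 V1'] V2]]; split.
      by split => //; split; [apply/andP; split; [exact: valid_shw | exact: valid_shs] | exact: valid_shw].
    by split=> -[psi [M H]]; exists psi; split => //; first [exact: (proj1 (eqCT HG psi S _) H) | exact: (proj2 (eqCT HG psi S _) H)].
Qed.
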